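(* Every maximal (with respect to inclusion) thin subset of $\mathbb{Z}_2^\omega$ is neither Borel nor meager.
   Context: $\mathbb{Z}_2^\omega$ is the Cantor cube of infinite binary sequences indexed by $\omega=\{0,1,2,\dots\}$, with the product (Tychonoff) topology. A set $T\subseteq\mathbb{Z}_2^\omega$ is thin if for every $n\in\omega$ the map $x\mapsto x|_{\omega\setminus\{n\}}$ is injective on $T$ (equivalently, no two distinct elements of $T$ differ in exactly one coordinate). *)

(* Defs.v *)
From HB Require Import structures.
From mathcomp Require Import all_boot all_order all_algebra.
From mathcomp Require Import all_classical all_reals all_analysis.
Set Implicit Arguments. Unset Strict Implicit. Unset Printing Implicit Defensive.
Local Open Scope classical_set_scope.

(* The Cantor cube Z_2^omega = bool^nat with the product topology is
   mathcomp-analysis' [cantor_space] (= prod_topology (fun _ : nat => bool)). *)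

Definition borel (T : topologicalType) (A : set T) : Prop :=
  <<s [set U : set T | open U] >> A.

Definition nowhere_dense (T : topologicalType) (A : set T) : Prop :=
  (closure A)^° = set0.

Definition meager (T : topologicalType) (A : set T) : Prop :=
  exists F : (set T)^nat, (forall n, nowhere_dense (F n)) /\ A `<=` \bigcup_n F n.

Definition thin (X : set cantor_space) : Prop :=
  forall (n : nat) (x y : cantor_space), X x -> X y ->
    (forall m : nat, m <> n -> x m = y m) -> x = y.

Definition maximal_thin (X : set cantor_space) : Prop :=
  thin X /\ forall Y : set cantor_space, thin Y -> X `<=` Y -> Y = X.

(* Main.v *)
Require Import Defs.
From mathcomp Require Import all_boot all_order all_algebra.
From mathcomp Require Import all_classical all_reals all_analysis.
Local Open Scope classical_set_scope.

Definition cyl (x : cantor_space) (k : nat) : set cantor_space :=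
  [set y | forall i, (i < k)%N -> y i = x i].

Lemma cyl_mono x k k' : (k <= k')%N -> cyl x k' `<=` cyl x k.
Proof. by move=> kk' y Hy i ik; apply: Hy; apply: leq_trans kk'. Qed.

Lemma nbhs_cyl (x : cantor_space) U : nbhs x U -> exists k, cyl x k `<=` U.
Proof.
pose F := filter_from [set: nat] (cyl x).
have FF : Filter F.
  apply: filter_from_filter; first by exists 0%N.
  move=> i j _ _; exists (maxn i j) => //; rewrite subsetI; split; apply: cyl_mono.
  exact: leq_maxl. exact: leq_maxr.
suff : F --> x by move=> /(_ U) H /H [k _ Hk]; exists k.
apply/(@cvg_sup (forall i : nat, bool) nat).
move=> i.
move=> A; rewrite nbhsE => -[B [oB Bx] BA].
case: oB => V _ HV.
exists i.+1 => // y Hy; apply: BA; rewrite -HV /=.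
rewrite (Hy i (ltnSn i)); move: Bx; rewrite -HV.
exact.
Qed.
Lemma cyl_nbhs (x : cantor_space) k : nbhs x (cyl x k).
Proof.
elim: k => [|k IH].
  have -> : cyl x 0 = setT by apply/seteqP; split => // y _ i; rewrite ltn0.
  exact: filterT.
have H : nbhs x (proj k @^-1` [set x k] : set cantor_space).
  apply: (@proj_continuous nat (fun _ => bool) k x).
  by [].
apply: filterS (filterI IH H) => y [Hy1 Hy2] i; rewrite ltnS leq_eqVlt.
case/predU1P => [->|]; [exact: Hy2| exact: Hy1].
Qed.
Definition flip (n : nat) (x : cantor_space) : cantor_space :=
  fun m => if m == n then ~~ x m else x m.

Lemma flipK n x : flip n (flip n x) = x.
Proof.
by apply: functional_extensionality_dep => m; rewrite /flip; case: eqP => // _; rewrite negbK.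
Qed.

Lemma cyl_flip n a b k : cyl a k b -> cyl (flip n a) k (flip n b).
Proof. by move=> H i ik; rewrite /flip (H i ik). Qed.

Lemma cyl_flip_in n x z k : (k <= n)%N -> cyl x k z -> cyl x k (flip n z).
Proof.
move=> kn H i ik; rewrite /flip; case: eqP => [ein|_]; last exact: H.
by move: ik; rewrite ein ltnNge kn.
Qed.

Lemma cyl_sub x y k k' : cyl x k y -> (k <= k')%N -> cyl y k' `<=` cyl x k.
Proof.
by move=> Hy kk' z Hz i ik; rewrite (Hz i (leq_trans ik kk')) (Hy i ik).
Qed.

Lemma cyl_refl x k : cyl x k x.
Proof. by []. Qed.

Definition nd' (F : set cantor_space) : Prop :=
  forall x k, exists y k', [/\ (k < k')%N, cyl y k' `<=` cyl x k &
     forall z, cyl y k' z -> ~ F z].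

Definition meager' (M : set cantor_space) : Prop :=
  exists F : (set cantor_space)^nat, (forall n, nd' (F n)) /\ M `<=` \bigcup_n F n.

Lemma nd_nd' F : nowhere_dense F -> nd' F.
Proof.
move=> ndF x k.
have [y [Hy Hcl]] : exists y, cyl x k y /\ ~ closure F y.
  apply: contrapT => H.
  have : (closure F)^° x.
    apply: filterS (cyl_nbhs x k) => y Hy; apply: contrapT => Hn.
    by apply: H; exists y.
  by rewrite ndF.
have [B [nB HB]] : exists B, nbhs y B /\ ~ (F `&` B !=set0).
  by apply: contrapT => H; apply: Hcl => B nB; apply: contrapT => HH; apply: H; exists B.
have [j Hj] := nbhs_cyl y B nB.
exists y, (maxn j k.+1); split.
- by rewrite (leq_trans (ltnSn k)) // leq_maxr.
- by apply: cyl_sub Hy _; rewrite (leq_trans (leqnSn k)) // leq_maxr.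
- move=> z Hz Fz; apply: HB; exists z; split => //; apply: Hj.
  by apply: cyl_mono Hz; apply: leq_maxl.
Qed.

Lemma meager_meager' M : meager M -> meager' M.
Proof. by move=> [F [HF HM]]; exists F; split => // n; apply: nd_nd'. Qed.

Lemma baire' M : meager' M -> forall x k, exists z, cyl x k z /\ ~ M z.
Proof.
move=> [F [HF HM]] x k.
have st : forall n (p : cantor_space * nat), {q : cantor_space * nat |
    [/\ (p.2 < q.2)%N, cyl q.1 q.2 `<=` cyl p.1 p.2 & forall z, cyl q.1 q.2 z -> ~ F n z]}.
  move=> n p; apply: cid; have [y [k' H]] := HF n p.1 p.2; by exists (y, k').
pose fix s n := if n is m.+1 then sval (st m (s m)) else (x, k).
have S1 n : [/\ ((s n).2 < (s n.+1).2)%N, cyl (s n.+1).1 (s n.+1).2 `<=` cyl (s n).1 (s n).2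
   & forall z, cyl (s n.+1).1 (s n.+1).2 z -> ~ F n z].
  exact: (svalP (st n (s n))).
have S2 n : (n <= (s n).2)%N.
  elim: n => // n IH; have [H _ _] := S1 n; exact: leq_ltn_trans IH H.
have S3 n m : (n <= m)%N -> cyl (s m).1 (s m).2 `<=` cyl (s n).1 (s n).2.
  elim: m => [|m IH]; first by rewrite leqn0 => /eqP ->.
  rewrite leq_eqVlt => /predU1P [-> //|]; rewrite ltnS => /IH H.
  have [_ H2 _] := S1 m; exact: subset_trans H2 H.
pose z : cantor_space := fun i => (s i.+1).1 i.
have S5 n : cyl (s n).1 (s n).2 z.
  move=> i ik; rewrite /z.
  case: (leqP n i.+1) => h.
    exact: (S3 _ _ h _ (cyl_refl _ _)).
  symmetry; apply: (S3 _ _ (ltnW h) _ (cyl_refl _ _)).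
  exact: leq_trans (ltnSn i) (S2 i.+1).
exists z; split; first exact: (S5 0%N).
move=> /HM [n _ Fz]; have [_ _ H] := S1 n; exact: H (S5 n.+1) Fz.
Qed.

Lemma meager'_sub A B : A `<=` B -> meager' B -> meager' A.
Proof. by move=> AB [F [HF HB]]; exists F; split => //; apply: subset_trans HB. Qed.

Lemma cyl_S x k : cyl x k.+1 `<=` cyl x k.
Proof. by move=> z Hz i ik; apply: Hz; apply: ltnW. Qed.

Lemma nd'_set0 : nd' set0.
Proof. by move=> x k; exists x, k.+1; split => //; [exact: cyl_S | move=> ? _ []]. Qed.

Lemma meager'_nd' A : nd' A -> meager' A.
Proof. by move=> H; exists (fun _ => A); split => // z Az; exists 0%N. Qed.

Lemma meager'_set0 : meager' set0.
Proof. exact: meager'_nd' nd'_set0. Qed.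

Lemma meager'_bigcup (A : (set cantor_space)^nat) :
  (forall n, meager' (A n)) -> meager' (\bigcup_n A n).
Proof.
move=> HA; have [G HG] := choice HA.
pose F k := if @unpickle (nat * nat)%type k is Some p then G p.1 p.2 else set0.
exists F; split.
  move=> k; rewrite /F; case: (unpickle k) => [p|]; last exact: nd'_set0.
  by have [H _] := HG p.1; apply: H.
move=> z [n _ Anz]; have [_ H] := HG n; have [m _ Gz] := H z Anz.
by exists (pickle (n, m)) => //; rewrite /F pickleK.
Qed.

Lemma meager'_U A B : meager' A -> meager' B -> meager' (A `|` B).
Proof.
move=> HA HB; apply: (@meager'_sub _ (\bigcup_n (if n is 0 then A else B))).
  by move=> z [Az|Bz]; [exists 0%N | exists 1%N].
by apply: meager'_bigcup => -[|n].
Qed.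

Lemma nd'_flip n F : nd' F -> nd' (flip n @^-1` F).
Proof.
move=> HF x k; have [y [k' [kk' Hs Hd]]] := HF (flip n x) k.
exists (flip n y), k'; split => //.
  move=> z /(cyl_flip n); rewrite flipK => /Hs /(cyl_flip n); by rewrite !flipK.
by move=> z /(cyl_flip n); rewrite flipK => /Hd.
Qed.

Lemma meager'_flip n A : meager' A -> meager' (flip n @^-1` A).
Proof.
move=> [F [HF HA]]; exists (fun m => flip n @^-1` F m); split.
  by move=> m; apply: nd'_flip.
by move=> z /HA [m _ H]; exists m.
Qed.

Lemma not_meager'T : ~ meager' setT.
Proof. by move=> /baire' /(_ (fun _ => false) 0%N) [z [_ H]]; apply: H. Qed.

Definition BP (A : set cantor_space) : Prop :=
  exists U, open U /\ meager' ((A `\` U) `|` (U `\` A)).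

Lemma nd'_boundary U : open U -> nd' (~` U `\` (~` U)^°).
Proof.
move=> oU x k.
have [[y [Hy Uy]]|H] := pselect (exists y, cyl x k y /\ U y).
  have nU : nbhs y U by move: oU; rewrite openE => /(_ y Uy).
  have [j Hj] := nbhs_cyl y U nU.
  exists y, (maxn j k.+1); split.
  - by rewrite (leq_trans (ltnSn k)) // leq_maxr.
  - by apply: cyl_sub Hy _; rewrite (leq_trans (leqnSn k)) // leq_maxr.
  - move=> z Hz [nUz _]; apply: nUz; apply: Hj.
    by apply: cyl_mono Hz; apply: leq_maxl.
exists x, k.+1; split => //; first exact: cyl_S.
move=> z Hz [_ []]; rewrite /interior /=.
have Hz' : cyl x k z by exact: cyl_S Hz.
apply: filterS (cyl_nbhs z k) => w Hw Uw; apply: H; exists w; split => //.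
exact: cyl_sub Hz' (leqnn k) _ Hw.
Qed.

Lemma BP_sigma : sigma_algebra setT BP.
Proof.
split.
- exists set0; split; first exact: open0.
  by apply: meager'_sub meager'_set0 => z [[]|[]].
- move=> A [U [oU HU]]; exists (~` U)^°; split; first exact: open_interior.
  apply: (@meager'_sub _ (((A `\` U) `|` (U `\` A)) `|` (~` U `\` (~` U)^°))).
    move=> z; case=> [[[_ nAz] nVz]|[Vz nA]].
      have [Uz|nUz] := pselect (U z).
        by left; right; split.
      by right; split.
    have Az : A z by apply: contrapT => nAz; apply: nA; split.
    left; left; split => //.
    by have := interior_subset Vz.
  exact: (meager'_U _ _ HU (meager'_nd' _ (nd'_boundary _ oU))).
- move=> A HA; have [G HG] := choice HA.
  exists (\bigcup_n G n); split.
    by apply: bigcup_open => n _; have [] := HG n.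
  apply: (@meager'_sub _ (\bigcup_n ((A n `\` G n) `|` (G n `\` A n)))).
    move=> z; case=> [[[n _ Az] nGz]|[[n _ Gz] nAz]].
      exists n => //; left; split => // Gz; apply: nGz; by exists n.
    exists n => //; right; split => // Az; apply: nAz; by exists n.
  by apply: meager'_bigcup => n; have [] := HG n.
Qed.

Lemma borel_BP A : borel A -> BP A.
Proof.
move=> HA; apply: HA; split; first exact: BP_sigma.
move=> U oU; exists U; split => //.
by apply: meager'_sub meager'_set0 => z [[]|[]].
Qed.

Lemma agree_flip n (a x : cantor_space) :
  (forall m, m <> n -> a m = x m) -> a = x \/ a = flip n x.
Proof.
move=> H; have [e|ne] := eqVneq (a n) (x n).
  left; apply: functional_extensionality_dep => m.
  have [->|mn] := eqVneq m n; first exact: e.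
  by apply: H; apply/eqP.
right; apply: functional_extensionality_dep => m; rewrite /flip.
case: eqP => [->|mn]; last exact: H.
by move: ne; case: (a n); case: (x n).
Qed.

Lemma thin_flip X n y : thin X -> X y -> X (flip n y) -> False.
Proof.
move=> tX Xy Xf.
have := tX n y (flip n y) Xy Xf.
have H : forall m, m <> n -> y m = flip n y m.
  by move=> m mn; rewrite /flip; case: eqP.
move=> /(_ H) /(congr1 (fun f => f n)); rewrite /flip eqxx.
by case: (y n).
Qed.

Lemma max_cover X : maximal_thin X -> forall x, X x \/ exists n, X (flip n x).
Proof.
move=> [tX mX] x; have [Xx|nXx] := pselect (X x); first by left.
right; apply: contrapT => nF.
have tY : thin (X `|` [set x]).
  move=> n a b Ya Yb H.
  have key : forall c, X c -> (forall m, m <> n -> c m = x m) -> c = x.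
    move=> c Xc Hc; case: (agree_flip _ _ _ Hc) => // e.
    by exfalso; apply: nF; exists n; rewrite -e.
  case: Ya => [Xa|ea]; case: Yb => [Xb|eb].
  - exact: (tX n a b Xa Xb H).
  - have eb' : b = x := eb; subst b; exact: (key a Xa H).
  - have ea' : a = x := ea; subst a.
    by apply/esym/(key b Xb) => m mn; apply/esym/H.
  - have ea' : a = x := ea; have eb' : b = x := eb; by subst.
have := mX _ tY (@subsetUl _ X [set x]).
by move=> E; apply: nXx; rewrite -E; right.
Qed.

Lemma max_not_meager' X : maximal_thin X -> ~ meager' X.
Proof.
move=> mX HX; apply: not_meager'T.
apply: (@meager'_sub _ (X `|` \bigcup_n (flip n @^-1` X))).
  move=> x _; case: (max_cover _ mX x) => [|[n H]]; first by left.
  by right; exists n.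
apply: meager'_U => //; apply: meager'_bigcup => n; exact: meager'_flip.
Qed.

Theorem corollary10 (X : set cantor_space) :
  maximal_thin X -> ~ borel X /\ ~ meager X.
Proof.
move=> mX; split; last by move=> /meager_meager'; exact: max_not_meager' _ mX.
move=> /borel_BP [U [oU HM]].
have [[x Ux]|nU] := pselect (exists x, U x); last first.
  apply: (max_not_meager' _ mX); apply: meager'_sub HM => z Xz.
  by left; split => // Uz; apply: nU; exists z.
have nU : nbhs x U by move: oU; rewrite openE => /(_ x Ux).
have [k Hk] := nbhs_cyl x U nU.
pose D := (X `\` U) `|` (U `\` X).
have [z [Hz nz]] := baire' _ (meager'_U _ _ HM (meager'_flip k _ HM)) x k.
have Uz : U z by exact: Hk.
have Uf : U (flip k z) by apply: Hk; exact: cyl_flip_in.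
have Xz : X z.
  by apply: contrapT => nXz; apply: nz; left; right; split.
have Xf : X (flip k z).
  by apply: contrapT => nXz; apply: nz; right; right; split.
case: mX => tX _; exact: thin_flip tX Xz Xf.
Qed.
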